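(* Let $\Omega$ be a finite set (the vocabulary), let $p$ and $q$ be probability distributions on $\Omega$, and let $K\ge 1$. Let $X_1,\ldots,X_K$ be drawn i.i.d. from $p$, and let $\mathcal{S}=\{X_1,\ldots,X_K\}$. Let $P^\star(\mathrm{acc})$ denote the supremum of $\Pr(Z\in\mathcal{S})$ over all valid token-level selection rules, where $Z$ is the output of the rule. Then $$P^\star(\mathrm{acc})=\max_{\{\beta_y(x_{1:K})\}}\ \sum_{y\in\Omega}\min\Big(q(y),\ \sum_{x_1,\ldots,x_K\in\Omega}\beta_y(x_{1:K})\prod_{i=1}^K p(x_i)\Big),$$ where the maximum is over all families of numbers $\beta_y(x_{1:K})$, indexed by $y\in\Omega$ and $x_{1:K}=(x_1,\ldots,x_K)\in\Omega^K$, such that $0\le\beta_y(x_{1:K})\le1$, $\sum_{y\in\Omega}\beta_y(x_{1:K})=1$ for every $x_{1:K}\in\Omega^K$, and $\beta_y(x_{1:K})=0$ whenever $y\notin\{x_1,\ldots,x_K\}$. Moreover, if $\{\beta^\star_y(x_{1:K})\}$ attains this maximum, then $P^\star(\mathrm{acc})$ is attained by the following two-step valid token-level selection rule: first, given inputs $x_{1:K}$, output an intermediate token $Y\in\{x_1,\ldots,x_K\}$ with $\Pr(Y=y\mid X_{1:K}=x_{1:K})=\beta^\star_y(x_{1:K})$; second, apply single-draft speculative sampling to $Y$ with target distribution $q$ to produce the final output $Z$.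
   Context: A token-level selection rule is a conditional distribution $\mathcal{P}(\cdot\mid \mathcal{S})$ on $\Omega$ given the input $(X_1,\ldots,X_K)$; it is valid if its output $Z$ satisfies $\Pr(Z=z)=q(z)$ for every $z\in\Omega$ (i.e. $\sum_{x_{1:K}}\mathcal{P}(z\mid x_{1:K})\prod_i p(x_i)=q(z)$). Single-draft speculative sampling of a token $Y$ with distribution $p_I$ against target $q$: with probability $\min(1,q(Y)/p_I(Y))$ output $Z=Y$; otherwise output $Z$ drawn from the residual distribution $p^{\mathrm{res}}(x)=\frac{q(x)-\min(p_I(x),q(x))}{1-\sum_{x'}\min(p_I(x'),q(x'))}$. Its output has distribution $q$. *)

(* Defs.v *)
From HB Require Import structures.
From mathcomp Require Import all_boot all_order all_algebra.
From mathcomp Require Import boolp classical_sets reals.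
Set Implicit Arguments. Unset Strict Implicit. Unset Printing Implicit Defensive.
Import Order.TTheory GRing.Theory Num.Theory.
Local Open Scope ring_scope.
Local Open Scope classical_set_scope.

Definition prob_dist (R : realType) (Omega : finType) (p : Omega -> R) : Prop :=
  (forall x, 0 <= p x) /\ \sum_(x : Omega) p x = 1.

Definition wprob (R : realType) (Omega : finType) (K : nat)
  (p : Omega -> R) (x : {ffun 'I_K -> Omega}) : R :=
  \prod_(i < K) p (x i).

Definition inS (Omega : finType) (K : nat) (y : Omega) (x : {ffun 'I_K -> Omega}) : bool :=
  [exists i, x i == y].

(* Token-level selection rule: a conditional distribution P(z | x_{1:K}).
   It is valid if the output Z has distribution q. *)
Definition valid_rule (R : realType) (Omega : finType) (K : nat)
  (p q : Omega -> R) (P : {ffun 'I_K -> Omega} -> Omega -> R) : Prop :=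
  [/\ (forall x z, 0 <= P x z),
      (forall x, \sum_(z : Omega) P x z = 1) &
      (forall z, \sum_(x : {ffun 'I_K -> Omega}) P x z * wprob p x = q z)].

Definition acc (R : realType) (Omega : finType) (K : nat)
  (p : Omega -> R) (P : {ffun 'I_K -> Omega} -> Omega -> R) : R :=
  \sum_(x : {ffun 'I_K -> Omega}) wprob p x * \sum_(z | inS z x) P x z.

Definition Pstar (R : realType) (Omega : finType) (K : nat) (p q : Omega -> R) : R :=
  sup [set acc p P | P in [set P : {ffun 'I_K -> Omega} -> Omega -> R | valid_rule p q P]].

Definition feasible (R : realType) (Omega : finType) (K : nat)
  (beta : Omega -> {ffun 'I_K -> Omega} -> R) : Prop :=
  [/\ (forall y x, 0 <= beta y x <= 1),
      (forall x, \sum_(y : Omega) beta y x = 1) &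
      (forall y x, ~~ inS y x -> beta y x = 0)].

Definition draft_dist (R : realType) (Omega : finType) (K : nat)
  (p : Omega -> R) (beta : Omega -> {ffun 'I_K -> Omega} -> R) (y : Omega) : R :=
  \sum_(x : {ffun 'I_K -> Omega}) beta y x * wprob p x.

Definition objective (R : realType) (Omega : finType) (K : nat)
  (p q : Omega -> R) (beta : Omega -> {ffun 'I_K -> Omega} -> R) : R :=
  \sum_(y : Omega) Num.min (q y) (draft_dist p beta y).

(* Single-draft speculative sampling with draft distribution pI, target q.
   Acceptance probability min(1, q(y)/pI(y)), with the convention that it is
   1 when pI(y) = 0 (q(y)/0 = +oo). *)
Definition spec_accept (R : realType) (Omega : finType) (pI q : Omega -> R) (y : Omega) : R :=
  if pI y == 0 then 1 else Num.min 1 (q y / pI y).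

Definition residual (R : realType) (Omega : finType) (pI q : Omega -> R) (z : Omega) : R :=
  (q z - Num.min (pI z) (q z)) / (1 - \sum_(x : Omega) Num.min (pI x) (q x)).

Definition spec_kernel (R : realType) (Omega : finType) (pI q : Omega -> R) (y z : Omega) : R :=
  (if z == y then spec_accept pI q y else 0) + (1 - spec_accept pI q y) * residual pI q z.

Definition two_step_rule (R : realType) (Omega : finType) (K : nat)
  (p q : Omega -> R) (beta : Omega -> {ffun 'I_K -> Omega} -> R)
  (x : {ffun 'I_K -> Omega}) (z : Omega) : R :=
  \sum_(y : Omega) beta y x * spec_kernel (draft_dist p beta) q y z.

(* Main.v *)
Require Import Defs.
From HB Require Import structures.
From mathcomp Require Import all_boot all_order all_algebra.
From mathcomp Require Import boolp classical_sets reals.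
From mathcomp Require Import topology normedtype derive.
Import Order.TTheory GRing.Theory Num.Theory.
Import numFieldNormedType.Exports.
Local Open Scope ring_scope.
Section Alg.
Variables (R : realType) (Omega : finType) (K : nat) (p q : Omega -> R).
Hypotheses (hp : prob_dist p) (hq : prob_dist q).
Local Notation X := {ffun 'I_K -> Omega}.

Lemma wprob_ge0 (x : X) : 0 <= wprob p x.
Proof. by rewrite /wprob; apply: prodr_ge0 => i _; case: hp. Qed.

Lemma sum_wprob : \sum_(x : X) wprob p x = 1.
Proof.
rewrite /wprob -(bigA_distr_bigA (fun (i : 'I_K) (j : Omega) => p j)) /=.
by rewrite big1 // => i _; case: hp.
Qed.

Variable beta : Omega -> X -> R.
Hypothesis hb : feasible beta.
Local Notation d := (draft_dist p beta).

Lemma d_ge0 y : 0 <= d y.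
Proof.
case: hb => h _ _; apply: sumr_ge0 => x _; apply: mulr_ge0; last exact: wprob_ge0.
by case/andP: (h y x).
Qed.

Lemma sum_d : \sum_y d y = 1.
Proof.
rewrite /draft_dist exchange_big /= -sum_wprob; apply: eq_bigr => x _.
by rewrite -mulr_suml; case: hb => _ -> _; rewrite mul1r.
Qed.

Lemma q_ge0 y : 0 <= q y. Proof. by case: hq. Qed.

Lemma acc01 y : 0 <= spec_accept d q y <= 1.
Proof.
rewrite /spec_accept; case: ifP => _; first by rewrite ler01 lexx.
rewrite le_min ler01 ge_min lexx orTb andbT /=.
by apply: divr_ge0; [exact: q_ge0 | exact: d_ge0].
Qed.

Lemma d_acc y : d y * spec_accept d q y = Num.min (d y) (q y).
Proof.
rewrite /spec_accept; case: eqP => [->|/eqP h].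
  by rewrite mul0r; apply/esym/min_idPl; exact: q_ge0.
rewrite minr_pMr; last exact: d_ge0.
by rewrite mulr1 mulrCA divff // mulr1.
Qed.

Local Notation S := (\sum_(x : Omega) Num.min (d x) (q x)).

Lemma S_le1 : S <= 1.
Proof.
case: hq => _ <-; apply: ler_sum => y _; rewrite ge_min lexx orbT //.
Qed.

Lemma S1_acc y : 1 - S = 0 -> spec_accept d q y = 1.
Proof.
move=> h0.
have e1 : \sum_y (q y - Num.min (d y) (q y)) = 0.
  by rewrite sumrB; case: hq => _ ->.
have e2 : \sum_y (d y - Num.min (d y) (q y)) = 0.
  by rewrite sumrB sum_d.
have g1 : forall i, true -> 0 <= q i - Num.min (d i) (q i).
  by move=> i _; rewrite subr_ge0 ge_min lexx orbT.
have g2 : forall i, true -> 0 <= d i - Num.min (d i) (q i).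
  by move=> i _; rewrite subr_ge0 ge_min lexx.
have h1 := @psumr_eq0P _ _ _ _ g1 e1 y isT.
have h2 := @psumr_eq0P _ _ _ _ g2 e2 y isT.
rewrite /spec_accept.
have -> : d y = q y.
  apply/eqP; rewrite eq_le; apply/andP; split.
    by move/eqP: h2; rewrite subr_eq0 => /eqP ->; rewrite ge_min lexx orbT.
  by move/eqP: h1; rewrite subr_eq0 => /eqP ->; rewrite ge_min lexx.
case: ifP => // /negbT h.
by rewrite divff // minxx.
Qed.

Lemma res_ge0 z : 0 <= residual d q z.
Proof.
apply: divr_ge0; first by rewrite subr_ge0 ge_min lexx orbT.
by rewrite subr_ge0 S_le1.
Qed.

Lemma kernel_ge0 y z : 0 <= spec_kernel d q y z.
Proof.
have /andP[a0 a1] := acc01 y.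
apply: addr_ge0; first by case: ifP.
by apply: mulr_ge0; [rewrite subr_ge0 | exact: res_ge0].
Qed.

Lemma kernel_sum y : \sum_z spec_kernel d q y z = 1.
Proof.
rewrite /spec_kernel big_split /= -big_mkcond /= big_pred1_eq -mulr_sumr.
have [h0|h0] := eqVneq (1 - S) 0.
  by rewrite S1_acc // subrr mul0r addr0.
rewrite /residual -mulr_suml sumrB; case: hq => _ ->.
by rewrite divff // mulr1 addrC subrK.
Qed.

Lemma kernel_mix z : \sum_y d y * spec_kernel d q y z = q z.
Proof.
rewrite /spec_kernel.
under eq_bigr => y _ do rewrite mulrDr.
rewrite big_split /=.
rewrite (eq_bigr (fun y => if y == z then d y * spec_accept d q y else 0)); last first.
  by move=> y _; rewrite (eq_sym z); case: ifP => _; rewrite ?mulr0.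
rewrite -big_mkcond /= big_pred1_eq d_acc.
under eq_bigr => y _ do rewrite mulrA mulrBr mulr1 d_acc.
rewrite -mulr_suml sumrB sum_d.
have [h0|h0] := eqVneq (1 - S) 0.
  rewrite h0 mul0r addr0.
  have e1 : \sum_y (q y - Num.min (d y) (q y)) = 0.
    by rewrite sumrB; case: hq => _ ->.
  have g1 : forall i, true -> 0 <= q i - Num.min (d i) (q i).
    by move=> i _; rewrite subr_ge0 ge_min lexx orbT.
  have h1 := @psumr_eq0P _ _ _ _ g1 e1 z isT.
  by move/eqP: h1; rewrite subr_eq0 => /eqP <-.
rewrite /residual mulrCA divff // mulr1 addrC subrK //.
Qed.

Lemma beta_ge0 y x : 0 <= beta y x.
Proof. by case: hb => h _ _; case/andP: (h y x). Qed.

Lemma two_step_valid : valid_rule p q (two_step_rule p q beta).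
Proof.
split.
- move=> x z; apply: sumr_ge0 => y _; apply: mulr_ge0; [exact: beta_ge0 | exact: kernel_ge0].
- move=> x; rewrite /two_step_rule exchange_big /=.
  under eq_bigr => y _ do rewrite -mulr_sumr kernel_sum mulr1.
  by case: hb => _ -> _.
- move=> z; rewrite /two_step_rule.
  under eq_bigr => x _ do rewrite mulr_suml.
  rewrite exchange_big /= -(kernel_mix z); apply: eq_bigr => y _.
  rewrite /draft_dist mulr_suml; apply: eq_bigr => x _.
  by rewrite mulrAC.
Qed.

Lemma obj_le_acc : objective p q beta <= acc p (two_step_rule p q beta).
Proof.
rewrite /objective.
under eq_bigr => y _ do rewrite minC -d_acc /draft_dist mulr_suml.
rewrite exchange_big /=; apply: ler_sum => x _.
under eq_bigr => y _ do rewrite mulrAC.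
rewrite -mulr_suml mulrC; apply: ler_wpM2l; first exact: wprob_ge0.
rewrite (big_mkcond (fun z => inS z x)) /=; apply: ler_sum => z _.
case: ifP => hz; last first.
  by case: hb => _ _ ->; rewrite ?mul0r ?hz.
rewrite /two_step_rule (bigD1 z) //= -[X in X <= _]addr0; apply: lerD.
  apply: ler_wpM2l; first exact: beta_ge0.
  rewrite /spec_kernel eqxx lerDl; apply: mulr_ge0; last exact: res_ge0.
  by have /andP[_ ?] := acc01 z; rewrite subr_ge0.
by apply: sumr_ge0 => y _; apply: mulr_ge0; [exact: beta_ge0 | exact: kernel_ge0].
Qed.

End Alg.

Section Upper.
Variables (R : realType) (Omega : finType) (K : nat) (p q : Omega -> R).
Hypotheses (hp : prob_dist p) (hq : prob_dist q) (hK : (0 < K)%N).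
Local Notation X := {ffun 'I_K -> Omega}.
Variable P : X -> Omega -> R.
Hypothesis hP : valid_rule p q P.

Definition betaP (y : Omega) (x : X) : R :=
  (if inS y x then P x y else 0) +
  (if y == x (Ordinal hK) then 1 - \sum_(z | inS z x) P x z else 0).

Lemma P_ge0 (x : X) z : 0 <= P x z. Proof. by case: hP. Qed.

Lemma sumS_le1 (x : X) : \sum_(z | inS z x) P x z <= 1.
Proof.
case: hP => h1 h2 _; rewrite -(h2 x) big_mkcond /=; apply: ler_sum => z _.
by case: ifP => _; rewrite ?h1.
Qed.

Lemma inS0 (x : X) : inS (x (Ordinal hK)) x.
Proof. by apply/existsP; exists (Ordinal hK). Qed.

Lemma betaP_ge0 y (x : X) : 0 <= betaP y x.
Proof.
apply: addr_ge0; case: ifP => _ //; first exact: P_ge0.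
by rewrite subr_ge0 sumS_le1.
Qed.

Lemma betaP_sum (x : X) : \sum_y betaP y x = 1.
Proof.
rewrite /betaP big_split /= -!big_mkcond /= big_pred1_eq.
by rewrite addrC subrK.
Qed.

Lemma betaP_feasible : feasible betaP.
Proof.
split.
- move=> y x; rewrite betaP_ge0 /= -(betaP_sum x) (bigD1 y) //= lerDl.
  by apply: sumr_ge0 => *; exact: betaP_ge0.
- exact: betaP_sum.
- move=> y x hy; rewrite /betaP (negbTE hy) add0r.
  case: eqP => // e; move: hy; rewrite e inS0 //.
Qed.

Lemma acc_le_obj : acc p P <= objective p q betaP.
Proof.
rewrite /acc /objective.
under eq_bigr => x _ do rewrite big_mkcond mulr_sumr /=.
rewrite exchange_big /=; apply: ler_sum => z _.
rewrite le_min; apply/andP; split.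
  case: hP => _ _ <-; apply: ler_sum => x _; rewrite mulrC.
  apply: ler_wpM2r; first exact: wprob_ge0.
  by case: ifP => _ //; exact: P_ge0.
rewrite /draft_dist; apply: ler_sum => x _; rewrite mulrC.
apply: ler_wpM2r; first exact: wprob_ge0.
rewrite /betaP lerDl; case: ifP => _ //.
by rewrite subr_ge0 sumS_le1.
Qed.

End Upper.

Local Open Scope classical_set_scope.
Section Topo.
Variable R : realType.

Lemma cont_sum (T : topologicalType) (J : Type) (s : seq J) (F : J -> T -> R) :
  (forall j, continuous (F j)) -> continuous (fun t => \sum_(j <- s) F j t).
Proof.
move=> hF; elim: s => [|a s IH].
  by under eq_fun => t do rewrite big_nil; exact: cst_continuous.
under eq_fun => t do rewrite big_cons.
by move=> t; apply: continuousD; [exact: hF | exact: IH].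
Qed.

Lemma closed_forall (T : topologicalType) (J : Type) (S : J -> set T) :
  (forall j, closed (S j)) -> closed [set t | forall j, S j t].
Proof.
move=> h; have -> : [set t | forall j, S j t] = \bigcap_(j in setT) S j.
  by apply/seteqP; split => t /= H j //; apply: H.
exact: closed_bigI.
Qed.

Lemma closed_pre (T : topologicalType) (f : T -> R) (D : set R) :
  continuous f -> closed D -> closed [set t | D (f t)].
Proof. by move=> cf cD; apply: (preimage_closed (f := f)) => // x _; exact: cf. Qed.

Lemma closed_impl (T : topologicalType) (f : T -> R) (b : bool) :
  continuous f -> closed [set t | ~~ b -> f t = 0].
Proof.
move=> cf; case: b.
  have -> : [set t | ~~ true -> f t = 0] = setT by apply/seteqP; split.
  exact: closedT.
have -> : [set t | ~~ false -> f t = 0] = [set t | [set r : R | r = 0] (f t)].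
  by apply/seteqP; split => v /=; [apply | move=> ->].
by apply: closed_pre => //; exact: closed_eq.
Qed.

End Topo.

Section Exist.
Variables (R : realType) (Omega : finType) (K : nat) (p q : Omega -> R).
Hypotheses (hp : prob_dist p) (hq : prob_dist q) (hK : (0 < K)%N).
Local Notation X := {ffun 'I_K -> Omega}.
Local Notation I := (Omega * X)%type.
Local Notation n := #|{: I}|.

Definition bv (v : 'rV[R]_n) : Omega -> X -> R :=
  fun y x => v ord0 (enum_rank (y, x)).

Lemma bv_cont y x : continuous (fun v : 'rV[R]_n => bv v y x).
Proof. exact: coord_continuous. Qed.

Lemma obj_cont : continuous (fun v => objective p q (bv v)).
Proof.
rewrite /objective /draft_dist; apply: cont_sum => y t.
apply: continuous_min; first exact: cst_continuous.
apply: (@cont_sum R _ _ (index_enum X) (fun x (v : 'rV[R]_n) => bv v y x * wprob p x)).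
move=> x s; by apply: continuousM; [exact: bv_cont | exact: cst_continuous].
Qed.

Definition Aset := [set v : 'rV[R]_n | feasible (bv v)].

Lemma Aset_closed : closed Aset.
Proof.
have -> : Aset = [set v | forall y x, [set r : R | 0 <= r] (bv v y x)] `&`
   [set v | forall y x, [set r : R | r <= 1] (bv v y x)] `&`
   [set v | forall x, [set r : R | r = 1] (\sum_y bv v y x)] `&`
   [set v | forall y x, [set v | ~~ inS y x -> bv v y x = 0] v].
  apply/seteqP; split => v /=.
    by case=> h1 h2 h3; do 3 split => //; move=> y x; case/andP: (h1 y x).
  by case=> [[[h1 h2] h3] h4]; split => // y x; rewrite h1 h2.
apply: closedI; [apply: closedI; [apply: closedI|]|].
- apply: closed_forall => y; apply: closed_forall => x.
  by apply: closed_pre; [exact: bv_cont | exact: closed_ge].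
- apply: closed_forall => y; apply: closed_forall => x.
  by apply: closed_pre; [exact: bv_cont | exact: closed_le].
- apply: closed_forall => x; apply: closed_pre; last exact: closed_eq.
  by apply: cont_sum => y; exact: bv_cont.
- apply: closed_forall => y; apply: closed_forall => x.
  by apply: closed_impl; exact: bv_cont.
Qed.

Lemma Aset_compact : compact Aset.
Proof.
have hc := rV_compact (fun i : 'I_n => @segment_compact R 0 1).
apply: (subclosed_compact Aset_closed hc).
move=> v [h1 _ _] i /=.
have := h1 (enum_val i).1 (enum_val i).2.
by rewrite /bv -surjective_pairing enum_valK in_itv.
Qed.

Definition vof (b : Omega -> X -> R) : 'rV[R]_n :=
  \row_j b (enum_val j).1 (enum_val j).2.

Lemma bv_vof b : bv (vof b) = b.
Proof.
by apply/funext => y; apply/funext => x; rewrite /bv /vof mxE enum_rankK.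
Qed.

Definition beta0 (y : Omega) (x : X) : R := if y == x (Ordinal hK) then 1 else 0.

Lemma beta0_feasible : feasible beta0.
Proof.
split.
- by move=> y x; rewrite /beta0; case: ifP; rewrite ?lexx ?ler01.
- by move=> x; rewrite /beta0 -big_mkcond big_pred1_eq.
- move=> y x hy; rewrite /beta0; case: eqP => // e.
  by move: hy; rewrite e (@inS0 _ _ hK).
Qed.

Lemma exists_max : exists beta : Omega -> X -> R, feasible beta /\
  forall b : Omega -> X -> R, feasible b -> objective p q b <= objective p q beta.
Proof.
have A0 : Aset !=set0 by exists (vof beta0); rewrite /Aset /= bv_vof; exact: beta0_feasible.
have cf : {within Aset, continuous (fun v => objective p q (bv v))}.
  by apply: continuous_subspaceT; exact: obj_cont.
have [c cA hc] := compact_EVT_max A0 Aset_compact cf.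
exists (bv c); split; first by move: cA; rewrite inE.
move=> b fb; have := hc (vof b); rewrite bv_vof; apply.
by rewrite inE /Aset /= bv_vof.
Qed.

End Exist.

Local Close Scope classical_set_scope.
Theorem theorem1 (R : realType) (Omega : finType) (K : nat) (p q : Omega -> R) :
  prob_dist p -> prob_dist q -> (0 < K)%N ->
  (* P*(acc) is the maximum of the objective over feasible beta *)
  ((exists beta : Omega -> {ffun 'I_K -> Omega} -> R,
      feasible beta /\ objective p q beta = Pstar K p q) /\
   (forall beta : Omega -> {ffun 'I_K -> Omega} -> R,
      feasible beta -> objective p q beta <= Pstar K p q)) /\
  (* any maximizer yields a valid rule attaining P*(acc) *)
  (forall betas : Omega -> {ffun 'I_K -> Omega} -> R,
     feasible betas ->
     (forall beta : Omega -> {ffun 'I_K -> Omega} -> R,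
        feasible beta -> objective p q beta <= objective p q betas) ->
     valid_rule p q (two_step_rule p q betas) /\
     acc p (two_step_rule p q betas) = Pstar K p q).
Proof.
move=> hp hq hK.
have [bs [fbs maxbs]] := @exists_max R Omega K p q hK.
set M := objective p q bs.
set E := [set acc p P | P in [set P : {ffun 'I_K -> Omega} -> Omega -> R | valid_rule p q P]]%classic.
have ub : forall P : {ffun 'I_K -> Omega} -> Omega -> R, valid_rule p q P -> acc p P <= M.
  move=> P hP; have h1 := @acc_le_obj R Omega K p q hp hK P hP.
  apply: le_trans h1 _.
  exact: maxbs (@betaP_feasible R Omega K p q hK P hP).
have inE2 : forall b : Omega -> {ffun 'I_K -> Omega} -> R, feasible b -> E (acc p (two_step_rule p q b)).
  by move=> b fb; exists (two_step_rule p q b) => //; exact: (@two_step_valid R Omega K p q hp hq).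
have ubE : ubound E M by move=> _ [P hP <-]; exact: ub.
have hE : has_sup E by split; [exists (acc p (two_step_rule p q bs)); exact: inE2 | exists M].
have PM : Pstar K p q = M.
  apply/eqP; rewrite eq_le; apply/andP; split.
    by apply: ge_sup => //; exists (acc p (two_step_rule p q bs)); exact: inE2.
  apply: le_trans (@obj_le_acc R Omega K p q hp hq bs fbs) _.
  exact: sup_upper_bound hE _ (inE2 _ fbs).
split; first split.
- by exists bs; split => //; rewrite PM.
- by move=> b fb; rewrite PM; exact: maxbs.
move=> b fb hb; split; first exact: (@two_step_valid R Omega K p q hp hq).
apply/eqP; rewrite eq_le; apply/andP; split.
  exact: sup_upper_bound hE _ (inE2 _ fb).
rewrite PM; apply: le_trans (hb _ fbs) _; exact: (@obj_le_acc R Omega K p q hp hq b fb).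
Qed.
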